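(* Let $u,w\in\mathbb{D}$ and let $B(z)=\left(\frac{z-w}{1-\overline{w}z}\right)\left(\frac{z-u}{1-\overline{u}z}\right)$. Then the unique critical point $c$ of $B$ in $\mathbb{D}$ lies at the midpoint of the hyperbolic geodesic between $u$ and $w$. Further, there are sets $D_1,D_2\subset\mathbb{D}$ such that $D_1\cup D_2=\mathbb{D}$, $D_1\cap D_2=\{c\}$ and $B$ is a one-to-one map from $D_j$ onto $\mathbb{D}$ for $j=1,2$.
   Context: $\mathbb{D}$ denotes the open unit disk, equipped with its hyperbolic metric. *)

(* Defs.v *)
From HB Require Import structures.
From mathcomp Require Import all_boot all_order all_algebra.
From mathcomp Require Import all_classical all_reals all_analysis.
From mathcomp Require Import complex.
Set Implicit Arguments. Unset Strict Implicit. Unset Printing Implicit Defensive.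
Import Order.TTheory GRing.Theory Num.Theory.
Import numFieldNormedType.Exports.
Local Open Scope classical_set_scope.
Local Open Scope ring_scope.
Local Open Scope complex_scope.

Definition cabs (R : realType) (z : R[i]) : R := Normc.normc z.

Definition unit_disk (R : realType) : set R[i] := [set z | cabs z < 1].
Arguments unit_disk R : clear implicits.

Definition pseudo_hyp (R : realType) (z w : R[i]) : R :=
  cabs ((z - w) / (1 - w^* * z)).

(* hyperbolic (Poincare) distance on the disk: 2 artanh(rho) = ln((1+rho)/(1-rho)) *)
Definition hdist (R : realType) (z w : R[i]) : R :=
  ln ((1 + pseudo_hyp z w) / (1 - pseudo_hyp z w)).

(* m is the midpoint of the hyperbolic geodesic segment from u to w:
   m lies on the geodesic (equality in the triangle inequality) and is
   equidistant from both endpoints. *)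
Definition hyp_midpoint (R : realType) (u w m : R[i]) : Prop :=
  m \in unit_disk R /\ hdist u m = hdist m w /\ hdist u m + hdist m w = hdist u w.

Definition blaschke_factor (R : realType) (a z : R[i]) : R[i] :=
  (z - a) / (1 - a^* * z).

(* complex derivative and complex differentiability, via MathComp-Analysis's
   derive1/derivable on the normed module R[i]^o over the field R[i]
   (R[i]^o is definitionally R[i]). *)
Definition cderive (R : realType) (f : R[i] -> R[i]) (z : R[i]) : R[i] :=
  derive1 (f : R[i]^o -> R[i]^o) z.
Definition cderivable (R : realType) (f : R[i] -> R[i]) (z : R[i]) : Prop :=
  derivable (f : R[i]^o -> R[i]^o) z 1.

(* Main.v *)
Require Import Defs.
From HB Require Import structures.
From mathcomp Require Import all_boot all_order all_algebra.
From mathcomp Require Import all_classical all_reals all_analysis.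
From mathcomp Require Import complex.
From mathcomp Require Import ring lra.
Import Order.TTheory GRing.Theory Num.Theory.
Import numFieldNormedType.Exports.
Local Open Scope classical_set_scope.
Local Open Scope ring_scope.

Set Implicit Arguments. Unset Strict Implicit.
Section Alg.
Variable F : fieldType.
Implicit Types u ub w wb K z c cb a ab t s sb x y : F.

Definition gam u ub w wb := -(u+w) + u*w*(ub+wb).
Definition keyE u ub w wb K :=
  gam u ub w wb * gam ub u wb w * K^+2 - 2 * (1 - u*ub*w*wb) * K + 1.

Lemma alg_Tw u ub w wb K :
  let c := - gam u ub w wb * K in let cb := - gam ub u wb w * K in
  (w-c)*(1-cb*u) + (u-c)*(1-cb*w) = (u+w) * keyE u ub w wb K.
Proof. rewrite /keyE /gam /=; ring. Qed.

Lemma alg_M u ub w wb K z :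
  let c := - gam u ub w wb * K in let cb := - gam ub u wb w * K in
  (z-c)*(1-cb*z) - K * ((1-wb*w)*(z-u)*(1-ub*z) + (1-ub*u)*(z-w)*(1-wb*z))
  = z * keyE u ub w wb K.
Proof. rewrite /keyE /gam /=; ring. Qed.

Lemma alg_D u ub w wb z :
  1 - wb * z != 0 -> 1 - ub * z != 0 ->
  (z - w) / (1 - wb * z) * ((1 - ub * u) / (1 - ub * z) ^+ 2) +
  (z - u) / (1 - ub * z) * ((1 - wb * w) / (1 - wb * z) ^+ 2)
  = ((1-wb*w)*(z-u)*(1-ub*z) + (1-ub*u)*(z-w)*(1-wb*z))
     / ((1 - wb * z)^+2 * (1 - ub * z)^+2).
Proof. move=> h1 h2; field; by rewrite ?h1 ?h2 ?mulf_neq0 ?expf_neq0. Qed.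

Lemma alg_diffnum u ub w wb :
  (1 - u*ub*w*wb)^+2 - gam u ub w wb * gam ub u wb w
  = (1 - u*ub)*(1-w*wb)*((1-ub*w)*(1-u*wb)).
Proof. rewrite /gam; ring. Qed.

Lemma alg_key (P q G k : F) : G = P^+2 - q^+2 -> P + q != 0 -> k = (P+q)^-1 ->
  G * k^+2 - 2 * P * k + 1 = 0.
Proof. move=> -> h ->; field. exact h. Qed.

Lemma alg_comp a ab c cb z :
  1 - cb * z != 0 -> 1 - cb * a != 0 -> 1 - c * ab != 0 -> 1 - c * cb != 0 ->
  1 - ab * z != 0 ->
  (z - a) / (1 - ab * z) =
  ((1 - cb * a) / (1 - c * ab)) *
  (((z - c)/(1 - cb * z) - (a - c)/(1 - cb*a)) /
   (1 - (ab - cb)/(1 - c*ab) * ((z - c)/(1 - cb * z)))).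
Proof.
move=> h1 h2 h3 h4 h5.
have -> : 1 - (ab - cb)/(1 - c*ab) * ((z - c)/(1 - cb * z)) =
   (1 - c*cb)*(1-ab*z) / ((1-c*ab)*(1-cb*z)).
  by field; rewrite ?h1 ?h3.
field. by rewrite ?h1 ?h2 ?h3 ?h4 ?h5.
Qed.

Lemma alg_prod t s sb : 1 - sb * t != 0 -> 1 - (-sb) * t != 0 ->
  (t - (-s)) / (1 - (-sb) * t) * ((t - s) / (1 - sb * t)) =
  (t^+2 - s^+2) / (1 - sb^+2 * t^+2).
Proof.
move=> h1 h2.
have h3 : 1 - sb^+2 * t^+2 = (1 - sb * t) * (1 - (-sb) * t) by ring.
rewrite h3; field. by rewrite h1 h2.
Qed.

Lemma alg_inv c cb t : 1 - (-cb) * t != 0 -> 1 - cb * c != 0 ->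
  ((t - (-c)) / (1 - (-cb) * t) - c) / (1 - cb * ((t - (-c)) / (1 - (-cb) * t))) = t.
Proof.
move=> h1 h2.
have -> : 1 - cb * ((t - - c) / (1 - - cb * t)) = (1 - cb * c) / (1 - - cb * t).
  by field.
field. by rewrite h1 h2.
Qed.

Lemma alg_inj a ab x y : 1 - ab * x != 0 -> 1 - ab * y != 0 ->
  (x - a) / (1 - ab * x) - (y - a) / (1 - ab * y) =
  (x - y) * (1 - ab * a) / ((1 - ab * x) * (1 - ab * y)).
Proof. move=> h1 h2; field. by rewrite h1 h2. Qed.

Lemma alg_mid s sb : 1 - (-sb) * s != 0 ->
  (s - (-s)) / (1 - (-sb) * s) = 2 * s / (1 + sb * s).
Proof. move=> h; have -> : 1 + sb * s = 1 - (-sb) * s by ring. field. exact h. Qed.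
End Alg.

Unset Implicit Arguments. Set Strict Implicit.

Section Cx.
Variable R : realType.
Local Notation C := R[i].
Local Notation bf := blaschke_factor.
Local Notation rc := (real_complex R).
Implicit Types a z x y : C.

Lemma nc2 z : rc (cabs z ^+ 2) = z * z^*.
Proof.
case: z => a b; rewrite /cabs /= sqr_sqrtr ?addr_ge0 ?sqr_ge0 //.
rewrite -[(Complex a b)^*]/(Complex a (- b)). apply/eqP; rewrite eq_complex /=. apply/andP; split; apply/eqP; ring.
Qed.

Lemma RCB (x y : R) : rc (x - y) = rc x - rc y :> C.
Proof. by rewrite rmorphB. Qed.
Lemma RCD (x y : R) : rc (x + y) = rc x + rc y :> C.
Proof. by rewrite rmorphD. Qed.
Lemma RCM (x y : R) : rc (x * y) = rc x * rc y :> C.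
Proof. by rewrite rmorphM. Qed.
Lemma RCX (x : R) n : rc (x ^+ n) = rc x ^+ n :> C.
Proof. by rewrite rmorphXn. Qed.
Lemma RCn n : rc (n%:R) = n%:R :> C.
Proof. by rewrite rmorph_nat. Qed.
Lemma RC1 : rc (1 : R) = 1 :> C.
Proof. by []. Qed.
Lemma RC0 : rc (0 : R) = 0 :> C.
Proof. by []. Qed.
Lemma RCN (x : R) : rc (- x) = - rc x :> C.
Proof. by rewrite rmorphN. Qed.
Lemma RCV (x : R) : rc (x^-1) = (rc x)^-1 :> C.
Proof. by rewrite fmorphV. Qed.
Lemma JB x y : (x - y)^* = x^* - y^*.
Proof. by rewrite rmorphB. Qed.
Lemma JD x y : (x + y)^* = x^* + y^*.
Proof. by rewrite rmorphD. Qed.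
Lemma JM x y : (x * y)^* = x^* * y^*.
Proof. by rewrite rmorphM. Qed.
Lemma JN x : (- x)^* = - x^*.
Proof. by rewrite rmorphN. Qed.
Lemma JX x n : (x ^+ n)^* = x^* ^+ n.
Proof. by rewrite rmorphXn. Qed.
Lemma J1 : (1 : C)^* = 1.
Proof. exact: rmorph1. Qed.
Lemma JV x : (x^-1)^* = x^*^-1.
Proof. exact: fmorphV. Qed.
Lemma JR (r : R) : (rc r)^* = rc r.
Proof. exact: (conjc_real r). Qed.
Lemma JK x : x^*^* = x.
Proof. exact: conjCK. Qed.

Lemma cabs_ge0 z : 0 <= cabs z.
Proof. by case: z => a b; rewrite /cabs /= sqrtr_ge0. Qed.

Lemma cabsJ z : cabs z^* = cabs z.
Proof. by case: z => a b; rewrite /cabs /= sqrrN. Qed.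

Lemma cabsN z : cabs (- z) = cabs z.
Proof. by case: z => a b; rewrite /cabs /= !sqrrN. Qed.

Lemma cabsM x y : cabs (x * y) = cabs x * cabs y.
Proof. exact: Normc.normcM. Qed.

Lemma cabsV x : cabs x^-1 = (cabs x)^-1.
Proof. exact: Normc.normcV. Qed.

Lemma cabs1 : cabs (1 : C) = 1.
Proof. exact: Normc.normc1. Qed.

Lemma cabsR (r : R) : 0 <= r -> cabs (rc r) = r.
Proof.
by move=> h; rewrite /cabs /= expr0n /= addr0 sqrtr_sqr ger0_norm.
Qed.

Lemma cabs_gt0 z : z != 0 -> 0 < cabs z.
Proof.
move=> hz; rewrite lt_def cabs_ge0 andbT; apply/eqP => /Normc.eq0_normc.
by move/eqP: hz.
Qed.

Lemma disk_ne a z : cabs a < 1 -> cabs z < 1 -> 1 - a^* * z != 0.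
Proof.
move=> ha hz; apply/eqP => /eqP; rewrite subr_eq0 => /eqP h.
have : cabs (a^* * z) = 1 by rewrite -h cabs1.
rewrite cabsM cabsJ => e. have := cabs_ge0 a; have := cabs_ge0 z. nra.
Qed.

Lemma bf_disk a z : cabs a < 1 -> cabs z < 1 -> cabs (bf a z) < 1.
Proof.
move=> ha hz. have hn := disk_ne _ _ ha hz.
have E : cabs (1 - a^* * z) ^+ 2 - cabs (z - a) ^+ 2 =
    (1 - cabs a ^+2) * (1 - cabs z ^+ 2).
  apply: complexI. rewrite !RCB !nc2 RCM !RCB !nc2 RC1. rewrite !JB !JM J1 !JK.
  ring.
rewrite /bf /blaschke_factor cabsM cabsV.
have d0 := cabs_gt0 _ hn.
have := cabs_ge0 a; have := cabs_ge0 z; have := cabs_ge0 (z - a) => n0 z0 a0.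
have p1 : 0 < 1 - cabs a ^+ 2 by nra.
have p2 : 0 < 1 - cabs z ^+ 2 by nra.
have p3 := mulr_gt0 p1 p2.
rewrite -E in p3.
rewrite ltr_pdivrMr // mul1r. nra.
Qed.

Lemma cabs_lt1 (r : R) : 0 <= r -> r ^+ 2 < 1 -> r < 1.
Proof. move=> h1 h2; nra. Qed.


Lemma bf_der (a z : C) : 1 - a^* * z != 0 ->
  is_derive (z : C^o) (1:C^o) (bf a : C^o -> C^o) ((1 - a^* * a) / (1 - a^* * z) ^+ 2).
Proof.
move=> nz.
have -> : (bf a : C^o -> C^o) = (fun x : C^o => x - a) * (fun x : C^o => (1 - a^* * x)^-1).
  by apply/funext => x.
have h1 : is_derive (z : C^o) (1 : C^o) (fun x : C^o => x - a) 1.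
  have := @is_deriveB C C^o C^o id (cst (a : C^o)) z 1 1 0 (is_derive_id _ _) (is_derive_cst _ _ _).
  by rewrite subr0 => H; exact H.
have h2 : is_derive (z : C^o) (1 : C^o) (fun x : C^o => 1 - a^* * x) (- a^*).
  have hz := @is_deriveZ C C^o C^o id a^* z 1 1 (is_derive_id _ _).
  have := @is_deriveB C C^o C^o (cst (1 : C^o)) (a^* \*: id) z 1 0 (a^* *: 1) (is_derive_cst _ _ _) hz.
  by rewrite sub0r /GRing.scale /= mulr1 => H; exact H.
have h3 : is_derive (z : C^o) (1 : C^o) (fun x : C^o => (1 - a^* * x)^-1) (- (1 - a^* * z)^-2 *: - a^*).
  apply: DeriveDef; first exact: derivableV.
  by rewrite deriveV // derive_val.
apply: is_derive_eq.
simpl. rewrite /GRing.scale /=. field. exact: nz.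
Qed.

Lemma bfJ a z : (bf a z)^* = (z^* - a^*) / (1 - a * z^*).
Proof. by rewrite /blaschke_factor JM JV JB JB J1 JM JK. Qed.

Lemma cabs_div_conj x : x != 0 -> cabs (x / x^*) = 1.
Proof.
move=> hx; rewrite cabsM cabsV cabsJ divff //.
by rewrite gt_eqF // cabs_gt0.
Qed.

Lemma cabs_bf_sym a z : cabs (bf a z) = cabs (bf z a).
Proof.
rewrite /blaschke_factor !cabsM !cabsV.
have -> : a - z = - (z - a) by rewrite opprB.
rewrite cabsN; congr (_ * _ ^-1).
rewrite -[in RHS]cabsJ JB J1 JM JK mulrC. by [].
Qed.

Lemma bf_inj a x y : cabs a < 1 -> cabs x < 1 -> cabs y < 1 -> bf a x = bf a y -> x = y.
Proof.
move=> ha hx hy e.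
have n1 := disk_ne _ _ ha hx; have n2 := disk_ne _ _ ha hy; have n3 := disk_ne _ _ ha ha.
have := @alg_inj _ a a^* x y n1 n2. rewrite -/(bf a x) -/(bf a y) e subrr => /esym/eqP.
rewrite mulf_eq0 invr_eq0 !mulf_eq0 (negbTE n1) (negbTE n2) (negbTE n3) !orbF subr_eq0.
by move/eqP.
Qed.

Lemma mul_disk x y : cabs x < 1 -> cabs y < 1 -> cabs (x * y) < 1.
Proof.
move=> hx hy; rewrite cabsM. have := cabs_ge0 x; have := cabs_ge0 y => h1 h2. nra.
Qed.

Lemma sq_disk x : cabs x < 1 -> cabs (x ^+ 2) < 1.
Proof. by move=> h; rewrite expr2 mul_disk. Qed.

Lemma sq_disk_inv x : cabs (x ^+ 2) < 1 -> cabs x < 1.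
Proof.
move=> h; apply: cabs_lt1; first exact: cabs_ge0.
by rewrite expr2 -cabsM -expr2.
Qed.

Lemma hd_double (r : R) : 0 <= r -> r < 1 ->
  ln ((1 + r) / (1 - r)) + ln ((1 + r) / (1 - r)) =
  ln ((1 + 2 * r / (1 + r ^+ 2)) / (1 - 2 * r / (1 + r ^+ 2))).
Proof.
move=> h0 h1.
have n1 : 1 + r ^+ 2 != 0 by rewrite gt_eqF // ltr_pwDl // sqr_ge0.
have n2 : 1 - r != 0 by rewrite subr_eq0 eq_sym lt_eqF.
have p : 0 < (1 + r) / (1 - r) by rewrite divr_gt0 // ?subr_gt0 //; lra.
rewrite -lnM ?posrE //.
have -> : 1 - 2 * r / (1 + r ^+ 2) = (1 - r) ^+ 2 / (1 + r ^+ 2) by field.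
have -> : 1 + 2 * r / (1 + r ^+ 2) = (1 + r) ^+ 2 / (1 + r ^+ 2) by field.
congr ln. field. by rewrite n1 n2.
Qed.

Section Constr.
Variables u w : C.
Hypotheses (hu : cabs u < 1) (hw : cabs w < 1).

Let g := gam u u^* w w^*.
Lemma gJ : g^* = gam u^* u w^* w.
Proof. by rewrite /g /gam !JD !JN !JM !JD !JK. Qed.

Let P := 1 - cabs u ^+ 2 * cabs w ^+ 2.
Let Gr := cabs g ^+ 2.
Lemma PC : rc P = 1 - u * u^* * w * w^*.
Proof. by rewrite /P RCB RCM !nc2 RC1 mulrA. Qed.
Lemma GC : rc Gr = g * gam u^* u w^* w.
Proof. by rewrite /Gr nc2 gJ. Qed.

Let v := 1 - u^* * w.
Lemma diffE : P ^+ 2 - Gr = (1 - cabs u ^+ 2) * (1 - cabs w ^+ 2) * cabs v ^+ 2.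
Proof.
apply: complexI. rewrite RCB RCX PC GC RCM RCM nc2 !RCB RC1 !nc2.
rewrite /v !JB !JM J1 !JK /g /gam. ring.
Qed.

Lemma P_gt0 : 0 < P.
Proof.
have := cabs_ge0 u; have := cabs_ge0 w => h1 h2. rewrite /P.
have a2 : cabs u ^+ 2 < 1 by rewrite expr_lt1.
have w2 : cabs w ^+ 2 < 1 by rewrite expr_lt1.
have a0 : 0 <= cabs u ^+ 2 by rewrite sqr_ge0.
have w0 : 0 <= cabs w ^+ 2 by rewrite sqr_ge0.
nra.
Qed.

Lemma diff_gt0 : 0 < P ^+ 2 - Gr.
Proof.
rewrite diffE. have := cabs_ge0 u; have := cabs_ge0 w => h1 h2.
apply: mulr_gt0; first (apply: mulr_gt0; rewrite subr_gt0 expr_lt1 //).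
apply: exprn_gt0. apply: cabs_gt0. exact: disk_ne.
Qed.

Let q := Num.sqrt (P ^+ 2 - Gr).
Let k := (P + q)^-1.
Lemma q_gt0 : 0 < q.
Proof. by rewrite /q sqrtr_gt0 diff_gt0. Qed.
Lemma k_gt0 : 0 < k.
Proof. by rewrite /k invr_gt0 addr_gt0 ?P_gt0 ?q_gt0. Qed.

Lemma key_R : Gr * k ^+ 2 - 2 * P * k + 1 = 0.
Proof.
apply: alg_key; last by [].
  by rewrite /q sqr_sqrtr ?(ltW diff_gt0) // opprB addrC subrK.
by rewrite gt_eqF // addr_gt0 ?P_gt0 ?q_gt0.
Qed.

Lemma key_C : keyE u u^* w w^* (rc k) = 0.
Proof.
have := congr1 rc key_R. rewrite RCD RCB RCM GC RCX RCM RCM PC RCn RC1 RC0.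
by rewrite /keyE -/g.
Qed.

Definition cc := - g * rc k.
Lemma cJ : cc^* = - gam u^* u w^* w * rc k.
Proof. by rewrite /cc JM JN gJ JR. Qed.

Lemma c_disk : cabs cc < 1.
Proof.
have ck : cabs cc = cabs g * k by rewrite /cc cabsM cabsN cabsR // ltW // k_gt0.
apply: cabs_lt1; first exact: cabs_ge0.
rewrite ck exprMn -/Gr.
have -> : Gr * k ^+ 2 = 2 * P * k - 1.
  by apply/eqP; rewrite -subr_eq0 -key_R; apply/eqP; ring.
have : P * k < 1.
  rewrite /k ltr_pdivrMr; last exact: addr_gt0 P_gt0 q_gt0.
  by rewrite mul1r ltrDl q_gt0.
move=> h; lra.
Qed.

Lemma Tw : bf cc w = - bf cc u.
Proof.
have E := alg_Tw u u^* w w^* (rc k).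
rewrite /= key_C mulr0 -cJ in E.
have h1 := disk_ne _ _ c_disk hw.
have h2 := disk_ne _ _ c_disk hu.
apply/eqP; rewrite -subr_eq0 opprK.
rewrite /blaschke_factor.
have -> : (w - cc) / (1 - cc^* * w) + (u - cc) / (1 - cc^* * u) =
  ((w - cc) * (1 - cc^* * u) + (u - cc) * (1 - cc^* * w)) /
  ((1 - cc^* * w) * (1 - cc^* * u)).
  by field; rewrite h1 h2.
by rewrite /cc E mul0r.
Qed.

Definition Bf := fun z : C => bf w z * bf u z.
Definition Mz z := (1-w^**w)*(z-u)*(1-u^**z) + (1-u^**u)*(z-w)*(1-w^**z).

Lemma B_der z : cabs z < 1 -> is_derive (z:C^o) (1:C^o) (Bf : C^o -> C^o)
   (Mz z / ((1 - w^* * z)^+2 * (1 - u^* * z)^+2)).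
Proof.
move=> hz.
have n1 := disk_ne _ _ hw hz; have n2 := disk_ne _ _ hu hz.
have d1 := bf_der _ _ n1; have d2 := bf_der _ _ n2.
have := is_deriveM d1 d2.
rewrite /GRing.scale /= /blaschke_factor alg_D // => H; exact H.
Qed.

Lemma Mz_fact z : (z - cc) * (1 - cc^* * z) = rc k * Mz z.
Proof.
apply/eqP; rewrite -subr_eq0; apply/eqP.
have := alg_M u u^* w w^* (rc k) z.
by rewrite /= key_C mulr0 -cJ.
Qed.

Lemma B_crit z : cabs z < 1 -> (cderive Bf z == 0) = (z == cc).
Proof.
move=> hz.
have n1 := disk_ne _ _ hw hz; have n2 := disk_ne _ _ hu hz.
have n3 := disk_ne _ _ c_disk hz.
have kn : rc k != 0 by rewrite -RC0 (inj_eq (@complexI R)) gt_eqF // k_gt0.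
rewrite /cderive derive1E (@derive_val _ _ _ _ _ _ _ (B_der _ hz)).
rewrite mulf_eq0 invr_eq0 mulf_eq0 !expf_eq0 /= (negbTE n1) (negbTE n2) /= orbF.
rewrite -(mulrI_eq0 _ (mulfI kn)) -Mz_fact mulf_eq0 (negbTE n3) orbF.
by rewrite subr_eq0.
Qed.

Let s := bf cc u.
Definition mu := ((1 - cc^* * w) / (1 - cc * w^*)) * ((1 - cc^* * u) / (1 - cc * u^*)).
Definition sig := s ^+ 2.

Lemma comp a z : cabs a < 1 -> cabs z < 1 ->
  bf a z = ((1 - cc^* * a) / (1 - cc * a^*)) * bf (bf cc a) (bf cc z).
Proof.
move=> ha hz.
have h1 := disk_ne _ _ c_disk hz. have h2 := disk_ne _ _ c_disk ha.
have h3 : 1 - cc * a^* != 0 by rewrite mulrC; exact: (disk_ne _ _ ha c_disk).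
have h4 : 1 - cc * cc^* != 0 by rewrite mulrC; exact: disk_ne _ _ c_disk c_disk.
have h5 := disk_ne _ _ ha hz.
rewrite {1}/blaschke_factor (alg_comp h1 h2 h3 h4 h5).
by rewrite [bf (bf cc a) _]/blaschke_factor bfJ.
Qed.

Lemma s_disk : cabs s < 1.
Proof. exact: bf_disk _ _ c_disk hu. Qed.

Lemma ratio_abs a : cabs a < 1 -> cabs ((1 - cc^* * a) / (1 - cc * a^*)) = 1.
Proof.
move=> ha. have -> : 1 - cc * a^* = (1 - cc^* * a)^* by rewrite JB J1 JM JK.
apply: cabs_div_conj. exact: disk_ne _ _ c_disk ha.
Qed.

Lemma mu_abs : cabs mu = 1.
Proof. by rewrite /mu cabsM !ratio_abs // mul1r. Qed.

Lemma mu_neq0 : mu != 0.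
Proof. by apply/eqP => h; move: mu_abs; rewrite h /cabs /= expr0n /= addr0 sqrtr0 => /eqP; rewrite eq_sym oner_eq0. Qed.

Lemma decomp z : cabs z < 1 -> Bf z = mu * bf sig (bf cc z ^+ 2).
Proof.
move=> hz. rewrite /Bf (comp _ _ hw hz) (comp _ _ hu hz) Tw -/s.
set t := bf cc z.
have ht : cabs t < 1 by exact: bf_disk _ _ c_disk hz.
have n1 := disk_ne _ _ s_disk ht.
have n2 : 1 - (- s)^* * t != 0 by apply: disk_ne; rewrite ?cabsN ?s_disk.
have E : bf (- s) t * bf s t = bf sig (t ^+ 2).
  rewrite /blaschke_factor /sig JX. rewrite JN in n2 *. exact: alg_prod.
rewrite /mu -E. ring.
Qed.

Lemma sig_disk : cabs sig < 1.
Proof. exact: sq_disk _ s_disk. Qed.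

Lemma T_disk z : cabs z < 1 -> cabs (bf cc z) < 1.
Proof. exact: bf_disk _ _ c_disk. Qed.

Lemma Bf_disk z : cabs z < 1 -> cabs (Bf z) < 1.
Proof. by move=> hz; rewrite /Bf mul_disk // bf_disk. Qed.

Lemma Tinv t : cabs t < 1 -> bf cc (bf (- cc) t) = t /\ cabs (bf (- cc) t) < 1.
Proof.
move=> ht; split; last by apply: bf_disk; rewrite ?cabsN ?c_disk.
have h1 : 1 - (- cc)^* * t != 0 by apply: disk_ne; rewrite ?cabsN ?c_disk.
have h2 : 1 - cc^* * cc != 0 by exact: disk_ne _ _ c_disk c_disk.
rewrite JN in h1. rewrite -[RHS](alg_inv h1 h2).
by rewrite /blaschke_factor JN.
Qed.

Lemma sinv y : cabs y < 1 -> bf sig (bf (- sig) y) = y /\ cabs (bf (- sig) y) < 1.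
Proof.
move=> ht; split; last by apply: bf_disk; rewrite ?cabsN ?sig_disk.
have h1 : 1 - (- sig)^* * y != 0 by apply: disk_ne; rewrite ?cabsN ?sig_disk.
have h2 : 1 - sig^* * sig != 0 by exact: disk_ne _ _ sig_disk sig_disk.
rewrite JN in h1. rewrite -[RHS](alg_inv h1 h2).
by rewrite /blaschke_factor JN.
Qed.

Lemma mid : hyp_midpoint u w cc.
Proof.
have r1 : pseudo_hyp u cc = cabs s by [].
have r2 : pseudo_hyp cc w = cabs s.
  rewrite /pseudo_hyp -/(bf w cc) cabs_bf_sym Tw cabsN. by [].
have r3 : pseudo_hyp u w = 2 * cabs s / (1 + cabs s ^+ 2).
  rewrite /pseudo_hyp -/(bf w u) (comp _ _ hw hu) cabsM ratio_abs // mul1r Tw -/s.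
  have n : 1 - (- s^*) * s != 0 by rewrite -JN; apply: disk_ne; rewrite ?cabsN s_disk.
  rewrite /blaschke_factor JN alg_mid // cabsM cabsV.
  have -> : 1 + s^* * s = rc (1 + cabs s ^+ 2) by rewrite RCD RC1 nc2 mulrC.
  rewrite cabsR ?addr_ge0 ?sqr_ge0 // cabsM.
  have -> : (2 : C) = rc 2 by rewrite RCn.
  by rewrite cabsR.
split; first by apply/mem_set; exact: c_disk.
rewrite /hdist r1 r2 r3; split; first by [].
apply: hd_double; [exact: cabs_ge0 | exact: s_disk].
Qed.

Definition Dp (e : C -> C) := [set z : C | cabs z < 1 /\ bf cc z = e (sqrtc (bf cc z ^+ 2))].

Lemma Dbij (e : C -> C) : (forall x, e x ^+ 2 = x ^+ 2) ->
  set_bij (Dp e) (unit_disk R) Bf.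
Proof.
move=> he; split.
- by move=> z [hz _]; rewrite /unit_disk /=; exact: Bf_disk.
- move=> z1 z2 /set_mem [h1 e1] /set_mem [h2 e2] E.
  rewrite (decomp _ h1) (decomp _ h2) in E.
  have E' := mulfI mu_neq0 E.
  have E2 := bf_inj _ _ _ sig_disk (sq_disk _ (T_disk _ h1)) (sq_disk _ (T_disk _ h2)) E'.
  apply: (bf_inj _ _ _ c_disk h1 h2).
  by rewrite e1 e2 E2.
- move=> y hy. have hy' : cabs y < 1 by exact: hy.
  have hyy : cabs (y / mu) < 1 by rewrite cabsM cabsV mu_abs invr1 mulr1.
  have [E1 hv] := sinv _ hyy.
  set vv := bf (- sig) (y / mu) in E1 hv.
  set t := e (sqrtc vv).
  have t2 : t ^+ 2 = vv by rewrite /t he sqr_sqrtc.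
  have ht : cabs t < 1 by apply: sq_disk_inv; rewrite t2.
  have [E2 hz] := Tinv _ ht.
  exists (bf (- cc) t).
    split => //. by rewrite E2 t2.
  by rewrite (decomp _ hz) E2 t2 E1 mulrC divfK // mu_neq0.
Qed.

Lemma Dunion : Dp id `|` Dp (fun x => - x) = unit_disk R.
Proof.
apply/seteqP; split => z.
  by case=> [[hz _]|[hz _]].
move=> hz; have hz' : cabs z < 1 by exact: hz.
set t := bf cc z. set r := sqrtc (t ^+ 2).
have : (t - r) * (t + r) = 0.
  have -> : (t - r) * (t + r) = t ^+ 2 - r ^+ 2 by ring.
  by rewrite /r sqr_sqrtc subrr.
move/eqP; rewrite mulf_eq0 => /orP [|].
  by rewrite subr_eq0 => /eqP et; left.
by rewrite addr_eq0 => /eqP et; right.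
Qed.

Lemma cc_fix : bf cc cc = 0.
Proof. by rewrite /blaschke_factor subrr mul0r. Qed.

Lemma Dinter : Dp id `&` Dp (fun x => - x) = [set cc].
Proof.
apply/seteqP; split => z.
  move=> [[hz e1] [_ e2]].
  have et : bf cc z = - bf cc z by rewrite {1}e1 [in RHS]e2 opprK.
  have t0 : bf cc z = 0.
    have : (2 : C) * bf cc z = 0 by rewrite mulrDl mul1r {1}et addNr.
    by move/eqP; rewrite mulf_eq0 pnatr_eq0 /= => /eqP.
  apply: (bf_inj _ _ _ c_disk hz c_disk). by rewrite t0 cc_fix.
move=> ->. split; (split; first exact: c_disk); by rewrite cc_fix expr2 mulr0 sqrtc0 ?oppr0.
Qed.
End Constr.
End Cx.

Theorem theorem3p1 (R : realType) (u w : R[i]) :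
  u \in unit_disk R -> w \in unit_disk R ->
  let B := fun z : R[i] => blaschke_factor w z * blaschke_factor u z in
  exists c : R[i],
    (c \in unit_disk R /\ cderivable B c /\ cderive B c = 0 /\
     (forall z, z \in unit_disk R -> cderive B z = 0 -> z = c)) /\
    hyp_midpoint u w c /\
    exists D1 D2 : set R[i],
      D1 `|` D2 = unit_disk R /\ D1 `&` D2 = [set c] /\
      set_bij D1 (unit_disk R) B /\ set_bij D2 (unit_disk R) B.
Proof.
move=> /set_mem hu0 /set_mem hw0 B.
have hu : cabs u < 1 := hu0. have hw : cabs w < 1 := hw0.
exists (cc R u w).
have cd := c_disk _ _ _ hu hw.
split; [split; [|split; [|split]] | split].
- exact: mem_set.
- by case: (B_der _ _ _ hu hw _ cd).
- by apply/eqP; rewrite (B_crit _ _ _ hu hw _ cd).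
- by move=> z /set_mem hz /eqP; rewrite (B_crit _ _ _ hu hw _ hz) => /eqP.
- exact: mid _ _ _ hu hw.
- exists (Dp R u w id), (Dp R u w (fun x => - x)).
  split; first exact: Dunion.
  split; first exact: Dinter _ _ _ hu hw.
  split; apply: (Dbij _ _ _ hu hw) => // x; exact: sqrrN.
Qed.
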